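(* Let $(M^{2n},J)$ be an almost complex manifold of real dimension $2n$ and $o\in M$. Let $(U,z)$, $z=(z^1,\dots,z^n)$, be a local complex coordinate around $o$ (i.e. the real and imaginary parts of $z^1,\dots,z^n$ form a smooth chart on $U$, not necessarily compatible with $J$) such that $\frac{\partial}{\partial z^i}\big|_o\in T^{1,0}_oM$ for $i=1,\dots,n$. Let $f$ be a holomorphic function on $U$ such that $\frac{\partial^{|\alpha|}f}{\partial z^\alpha}(o)=0$ for every multi-index $\alpha$ with $|\alpha|\le m$. Then $\mathrm{ord}_o(f)\ge m+1$.
   Context: $T^{1,0}_oM$ is the $\sqrt{-1}$-eigenspace of $J$ on $T_oM\otimes\mathbb C$. A complex function $f$ is holomorphic if $\bar\partial f=(df)^{0,1}=0$, i.e. $df$ vanishes on the $(-\sqrt{-1})$-eigenspace $T^{0,1}$ of $J$. $\mathrm{ord}_o(f)$ is the vanishing order of $f$ at $o$: the largest $k$ such that all partial derivatives of $f$ (in any smooth chart) of order $<k$ vanish at $o$. *)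

(* Defs.v *)
From HB Require Import structures.
From mathcomp Require Import all_boot all_order all_algebra.
From mathcomp Require Import all_classical all_reals all_analysis.
Set Implicit Arguments. Unset Strict Implicit. Unset Printing Implicit Defensive.
Import Order.TTheory GRing.Theory Num.Theory.
Import numFieldNormedType.Exports.
Local Open Scope classical_set_scope.
Local Open Scope ring_scope.

(* Everything is expressed in the given chart (U, z): a point of U is a row
   vector p : 'rV[R]_(n + n) whose coordinates are
   (x^1, ..., x^n, y^1, ..., y^n), with z^j = x^j + i y^j.
   The coordinate index of x^j is lshift n j, that of y^j is rshift n j.
   Tangent vectors are row vectors; the almost complex structure at p is a
   matrix J p acting by X |-> X *m J p.
   A complex-valued function f = u + i v is represented by the pair (u, v)
   of its real and imaginary parts. *)

Section Defs.
Variables (R : realType) (n : nat).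
Local Notation V := 'rV[R]_(n + n).

Definition ebasis (k : 'I_(n + n)) : V := \row_(l < n + n) (l == k)%:R.
Definition ex (j : 'I_n) : V := ebasis (lshift n j).
Definition ey (j : 'I_n) : V := ebasis (rshift n j).

Definition partial (k : 'I_(n + n)) (g : V -> R) : V -> R :=
  fun p => derive g p (ebasis k).

Definition iter_partial (s : seq 'I_(n + n)) (g : V -> R) : V -> R :=
  foldr partial g s.

Definition smooth_on (U : set V) (g : V -> R) : Prop :=
  forall s : seq 'I_(n + n),
    (forall p, U p -> {for p, continuous (iter_partial s g)}) /\
    (forall k p, U p -> derivable (iter_partial s g) p (ebasis k)).

Definition almost_complex_on (U : set V) (J : V -> 'M[R]_(n + n)) : Prop :=
  (forall i j, smooth_on U (fun p => J p i j)) /\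
  (forall p, U p -> J p *m J p = - 1%:M).

(* a + sqrt(-1) b lies in the sqrt(-1)-eigenspace T^{1,0} of Jp *)
Definition in_T10 (Jp : 'M[R]_(n + n)) (a b : V) : Prop :=
  a *m Jp = - b /\ b *m Jp = a.
(* a + sqrt(-1) b lies in the (-sqrt(-1))-eigenspace T^{0,1} of Jp *)
Definition in_T01 (Jp : 'M[R]_(n + n)) (a b : V) : Prop :=
  a *m Jp = b /\ b *m Jp = - a.

Definition dR (g : V -> R) (p X : V) : R :=
  \sum_(k < n + n) X 0 k * partial k g p.

(* f = u + i v is holomorphic on U: df_p = d u + i d v vanishes on
   T^{0,1}_p for every p in U, where df_p(a + i b) =
   (du a - dv b) + i (dv a + du b). *)
Definition holomorphic_on (U : set V) (J : V -> 'M[R]_(n + n))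
  (u v : V -> R) : Prop :=
  forall p, U p -> forall a b : V, in_T01 (J p) a b ->
    dR u p a - dR v p b = 0 /\ dR v p a + dR u p b = 0.

(* d/dz^j (u + i v) = 1/2 (d/dx^j - i d/dy^j)(u + i v)
   = 1/2 (u_x + v_y) + i 1/2 (v_x - u_y) *)
Definition dz (j : 'I_n) (f : (V -> R) * (V -> R)) : (V -> R) * (V -> R) :=
  (fun p => 2^-1 * (partial (lshift n j) f.1 p + partial (rshift n j) f.2 p),
   fun p => 2^-1 * (partial (lshift n j) f.2 p - partial (rshift n j) f.1 p)).

Definition dz_multi (alpha : 'I_n -> nat) (f : (V -> R) * (V -> R)) :=
  foldr (fun j g => iter (alpha j) (dz j) g) f (enum 'I_n).

Definition mindex_size (alpha : 'I_n -> nat) : nat := (\sum_(j < n) alpha j)%N.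

(* ord_o(u + i v) >= k : every partial derivative of order < k of f
   (in the smooth chart x, y) vanishes at o *)
Definition ord_ge (u v : V -> R) (o : V) (k : nat) : Prop :=
  forall s : seq 'I_(n + n), (size s < k)%N ->
    iter_partial s u o = 0 /\ iter_partial s v o = 0.

End Defs.

(* Main.v *)
Require Import Defs.
From HB Require Import structures.
From mathcomp Require Import all_boot all_order all_algebra.
From mathcomp Require Import all_classical all_reals all_analysis.
From mathcomp Require Import zify ring lra.
Import Order.TTheory GRing.Theory Num.Theory.
Import numFieldNormedType.Exports.
Local Open Scope classical_set_scope.
Local Open Scope ring_scope.
Set Implicit Arguments. Unset Strict Implicit.
Section Work.
Variables (R : realType) (n : nat) (U : set 'rV[R]_(n + n)) (o : 'rV[R]_(n + n)).
Hypothesis oU : open U.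
Hypothesis Uo : U o.
Local Notation V := 'rV[R]_(n + n).
Local Notation S := (@smooth_on R n U).
Local Notation ip := (@iter_partial R n).

Definition eqU (f g : V -> R) := forall p, U p -> f p = g p.

Lemma nearU p : U p -> \forall q \near p, U q.
Proof. by move=> Up; apply: open_nbhs_nbhs; split. Qed.

Lemma partial_eqU k f g : eqU f g -> eqU (partial k f) (partial k g).
Proof.
move=> fg p Up; rewrite /partial; apply: near_eq_derive.
have := nearU Up; apply: filterS => q Uq; exact: fg.
Qed.

Lemma ip_eqU s f g : eqU f g -> eqU (ip s f) (ip s g).
Proof. by elim: s => [|k s IH] //= fg; apply: partial_eqU; apply: IH. Qed.

Lemma cont_eqU f g p : eqU f g -> U p -> {for p, continuous f} ->
  {for p, continuous g}.
Proof.
move=> fg Up cf.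
have nfg : {near p, f =1 g} by have := nearU Up; apply: filterS => q Uq; exact: fg.
rewrite /prop_for /continuous_at -(fg p Up); apply: cvg_trans cf.
exact: (near_eq_cvg nfg).
Qed.

Lemma der_eqU f g p v : eqU f g -> U p -> derivable f p v -> derivable g p v.
Proof.
move=> fg Up; apply: near_eq_derivable.
by have := nearU Up; apply: filterS => q Uq; exact: fg.
Qed.

Lemma S_eqU f g : S f -> eqU f g -> S g.
Proof.
move=> Sf fg s; have [c d] := Sf s; split.
  by move=> p Up; apply: cont_eqU (ip_eqU s fg) Up (c p Up).
by move=> k p Up; apply: der_eqU (ip_eqU s fg) Up (d k p Up).
Qed.

Lemma ip_cat s t f : ip (s ++ t) f = ip s (ip t f).
Proof. by rewrite /iter_partial foldr_cat. Qed.

Lemma ip_rcons s k f : ip (rcons s k) f = ip s (partial k f).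
Proof. by rewrite /iter_partial foldr_rcons. Qed.

Lemma S_ip s f : S f -> S (ip s f).
Proof. by move=> Sf t; rewrite -ip_cat; apply: Sf. Qed.

Lemma S_partial k f : S f -> S (partial k f).
Proof. exact: (S_ip [:: k]). Qed.

Lemma ip_cst s (c : R) :
  ip s (fun _ => c) = fun _ => if s is [::] then c else 0.
Proof.
elim: s => [|k s IH] //=; rewrite IH; apply/funext => p.
by rewrite /partial; case: s {IH} => [|_ _]; apply: derive_cst.
Qed.

Lemma S_cst (c : R) : S (fun _ => c).
Proof.
move=> s; rewrite ip_cst; split.
  by move=> p _; case: s => [|_ _]; apply: cst_continuous.
by move=> k p _; case: s => [|_ _]; apply: derivable_cst.
Qed.

Definition SU N (f : V -> R) := forall s, (size s <= N)%N ->
  (forall p, U p -> {for p, continuous (ip s f)}) /\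
  (forall k p, U p -> derivable (ip s f) p (@ebasis R n k)).

Lemma S_SU N f : S f -> SU N f.
Proof. by move=> Sf s _; apply: Sf. Qed.

Lemma ipD N f g s : SU N f -> SU N g -> (size s <= N.+1)%N ->
  eqU (ip s (f \+ g)) (ip s f \+ ip s g).
Proof.
move=> Sf Sg; elim: s => [|k s IH] //= Hs p Up.
rewrite (partial_eqU k (IH (ltnW Hs)) Up) /partial.
have [_ df] := Sf s Hs; have [_ dg] := Sg s Hs.
exact: (deriveD (df k p Up) (dg k p Up)).
Qed.

Lemma SUD N f g : SU N f -> SU N g -> SU N (f \+ g).
Proof.
move=> Sf Sg s Hs; have E := ipD Sf Sg (leqW Hs).
have [cf df] := Sf s Hs; have [cg dg] := Sg s Hs; split.
  move=> p Up; apply: (cont_eqU (g := ip s (f \+ g)) _ Up).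
    by move=> q Uq; rewrite E.
  exact: continuousD (cf p Up) (cg p Up).
move=> k p Up; apply: (der_eqU (f := ip s f \+ ip s g) _ Up).
  by move=> q Uq; rewrite E.
exact: derivableD (df k p Up) (dg k p Up).
Qed.

Lemma SD f g : S f -> S g -> S (f \+ g).
Proof.
move=> Sf Sg s; have := @SUD (size s) f g (S_SU Sf) (S_SU Sg) s (leqnn _).
done.
Qed.

Lemma leibniz k f g : S f -> S g ->
  eqU (partial k (f \* g)) ((partial k f \* g) \+ (f \* partial k g)).
Proof.
move=> Sf Sg p Up; have [_ df] := Sf [::]; have [_ dg] := Sg [::].
rewrite /partial; have := deriveM (df k p Up) (dg k p Up).
by rewrite /= => ->; rewrite addrC mulrC [X in _ + X]mulrC.
Qed.

Lemma SUM N : forall f g, S f -> S g -> SU N (f \* g).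
Proof.
elim: N => [|N IH] f g Sf Sg s; case/lastP: s => [|s k] Hs.
- have [cf df] := Sf [::]; have [cg dg] := Sg [::]; split.
    by move=> p Up; apply: continuousM (cf p Up) (cg p Up).
  by move=> k p Up; apply: derivableM (df k p Up) (dg k p Up).
- by rewrite size_rcons in Hs.
- have [cf df] := Sf [::]; have [cg dg] := Sg [::]; split.
    by move=> p Up; apply: continuousM (cf p Up) (cg p Up).
  by move=> k p Up; apply: derivableM (df k p Up) (dg k p Up).
rewrite size_rcons ltnS in Hs.
have S1 := IH _ _ (S_partial k Sf) Sg.
have S2 := IH _ _ Sf (S_partial k Sg).
have E1 := ip_eqU s (leibniz k Sf Sg).
have E2 := ipD S1 S2 (leqW Hs).
have E : eqU (ip s (partial k f \* g) \+ ip s (f \* partial k g))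
             (ip (rcons s k) (f \* g)).
  by move=> p Up; rewrite ip_rcons E1 // E2.
have [c1 d1] := S1 s Hs; have [c2 d2] := S2 s Hs; split.
  move=> p Up; apply: (cont_eqU E Up).
  exact: continuousD (c1 p Up) (c2 p Up).
move=> j p Up; apply: (der_eqU E Up).
exact: derivableD (d1 j p Up) (d2 j p Up).
Qed.

Lemma SM f g : S f -> S g -> S (f \* g).
Proof. by move=> Sf Sg s; apply: (@SUM (size s)). Qed.


Definition ordo (g : V -> R) (a : nat) := forall s, (size s < a)%N -> ip s g o = 0.

Lemma ord_eqU f g a : eqU f g -> ordo f a -> ordo g a.
Proof. by move=> fg fa s Hs; rewrite -(ip_eqU s fg Uo); apply: fa. Qed.

Lemma ord_le f a b : (b <= a)%N -> ordo f a -> ordo f b.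
Proof. by move=> ba fa s Hs; apply: fa; apply: leq_trans Hs ba. Qed.

Lemma ord_partial k f a : ordo f a -> ordo (partial k f) a.-1.
Proof.
move=> fa s Hs; rewrite -ip_rcons; apply: fa; rewrite size_rcons; lia.
Qed.

Lemma ord_add f g a : S f -> S g -> ordo f a -> ordo g a -> ordo (f \+ g) a.
Proof.
move=> Sf Sg fa ga s Hs.
rewrite (ipD (N := size s) (S_SU Sf) (S_SU Sg) (leqW (leqnn _)) Uo) /=.
by rewrite fa // ga // addr0.
Qed.

Lemma ord_cst0 a : ordo (fun _ => 0) a.
Proof. by move=> s _; rewrite ip_cst; case: s. Qed.

Lemma ord_mul f g a b : S f -> S g -> ordo f a -> ordo g b ->
  ordo (f \* g) (a + b).
Proof.
move=> + + + + s; elim/last_ind: s f g a b => [|s k IH] f g a b Sf Sg fa gb Hs.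
  case: a fa Hs => [|a] fa Hs.
    by have /= -> := gb [::] Hs; rewrite mulr0.
  by have /= -> := fa [::] (ltn0Sn _); rewrite mul0r.
rewrite ip_rcons (ip_eqU s (leibniz k Sf Sg) Uo).
have S1 := SM (S_partial k Sf) Sg; have S2 := SM Sf (S_partial k Sg).
rewrite (ipD (N := size s) (S_SU S1) (S_SU S2) (leqW (leqnn _)) Uo) /=.
rewrite size_rcons in Hs.
rewrite (IH _ _ a.-1 b (S_partial k Sf) Sg (ord_partial k fa) gb); last by lia.
by rewrite (IH _ _ a b.-1 Sf (S_partial k Sg) fa (ord_partial k gb)) ?addr0; last by lia.
Qed.

Lemma S_ord_sum (F : 'I_(n + n) -> V -> R) a (r : seq 'I_(n + n)) :
  (forall l, S (F l)) -> (forall l, ordo (F l) a) ->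
  S (fun p => \sum_(l <- r) F l p) /\ ordo (fun p => \sum_(l <- r) F l p) a.
Proof.
move=> SF oF; elim: r => [|x r [IHS IHo]].
  have -> : (fun p => \sum_(l <- [::]) F l p) = (fun _ => 0).
    by apply/funext => p; rewrite big_nil.
  by split; [exact: S_cst | exact: ord_cst0].
have -> : (fun p => \sum_(l <- x :: r) F l p) =
          F x \+ (fun p => \sum_(l <- r) F l p).
  by apply/funext => p; rewrite big_cons.
by split; [exact: SD | exact: ord_add].
Qed.

Lemma S_sum (F : 'I_(n + n) -> V -> R) (r : seq 'I_(n + n)) :
  (forall l, S (F l)) -> S (fun p => \sum_(l <- r) F l p).
Proof. by move=> SF; apply: (proj1 (@S_ord_sum F 0 r SF _)) => l s; rewrite ltn0. Qed.

Lemma line_derive (f : V -> R) (q e : V) (t : R) :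
  derivable f (q + t *: e) e ->
  is_derive t 1 (fun s : R => f (q + s *: e)) (derive f (q + t *: e) e).
Proof.
have E : (fun h : R => h^-1 *: (((fun s : R => f (q + s *: e)) \o shift t) (h *: 1)
            - f (q + t *: e))) =
         (fun h : R => h^-1 *: ((f \o shift (q + t *: e)) (h *: e) - f (q + t *: e))).
  apply/funext => h /=; congr (_ *: (f _ - _)).
  by rewrite -[h *: 1]/(h * 1) mulr1 scalerDl addrCA.
move=> df; apply: DeriveDef; first by rewrite /derivable E.
by rewrite /derive E.
Qed.

Local Notation eb := (@ebasis R n).

Lemma mvt_gen (f1 f2 : V -> R) (q1 q2 e : V) (a b : R) : a < b ->
  (forall t, a <= t <= b -> derivable f1 (q1 + t *: e) e /\ derivable f2 (q2 + t *: e) e) ->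
  exists2 c, a < c < b &
   (f1 (q1 + b *: e) - f2 (q2 + b *: e)) - (f1 (q1 + a *: e) - f2 (q2 + a *: e)) =
   (derive f1 (q1 + c *: e) e - derive f2 (q2 + c *: e) e) * (b - a).
Proof.
move=> ab D.
pose phi := (fun s : R => f1 (q1 + s *: e)) - (fun s : R => f2 (q2 + s *: e)).
pose dphi := fun t => derive f1 (q1 + t *: e) e - derive f2 (q2 + t *: e) e.
have Hd : forall t, a <= t <= b -> is_derive t 1 phi (dphi t).
  by move=> t /D [d1 d2]; apply: (is_deriveB (line_derive d1) (line_derive d2)).
have [||c] := @MVT R phi dphi a b ab.
- by move=> x; rewrite in_itv /= => /andP[h1 h2]; apply: Hd; rewrite !ltW.
- apply: derivable_within_continuous => x; rewrite in_itv /= => xab.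
  by have [] := Hd x xab.
by rewrite in_itv /= => cab E; exists c.
Qed.

Lemma norm_eb k : `|eb k| <= 1.
Proof.
change (mx_norm (eb k) <= 1); rewrite mx_normrE; apply: bigmax_le => // ij _; rewrite mxE.
by case: (ij.2 == k); rewrite ?normr1 ?normr0.
Qed.

Lemma dist_pt p i j s t h : 0 <= s <= h -> 0 <= t <= h ->
  `|p - (p + s *: eb i + t *: eb j)| <= h + h.
Proof.
move=> /andP[s0 sh] /andP[t0 th].
rewrite -addrA opprD addrA subrr add0r normrN.
apply: le_trans (ler_normD _ _) _; apply: lerD; rewrite normrZ ger0_norm //.
  by rewrite -[h]mulr1; apply: ler_pM => //; apply: norm_eb.
by rewrite -[h]mulr1; apply: ler_pM => //; apply: norm_eb.
Qed.

Lemma mvt2 g p i j h : S g -> 0 < h ->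
  (forall s t, 0 <= s <= h -> 0 <= t <= h -> U (p + s *: eb i + t *: eb j)) ->
  (forall s t, 0 <= s <= h -> 0 <= t <= h -> U (p + s *: eb j + t *: eb i)) ->
  exists s, exists t, [/\ 0 <= s <= h, 0 <= t <= h &
    g (p + h *: eb i + h *: eb j) - g (p + h *: eb i) - g (p + h *: eb j) + g p
    = h * h * partial j (partial i g) (p + s *: eb i + t *: eb j)].
Proof.
move=> Sg h0 U1 U2.
have hh : 0 <= h <= h by rewrite lexx ltW.
have U0 : forall t, 0 <= t <= h -> U (p + t *: eb i).
  by move=> t ht; have := U1 t 0 ht; rewrite scale0r addr0; apply; rewrite lexx ltW.
have [xi /andP[xi0 xih] E1] := @mvt_gen g g (p + h *: eb j) p (eb i) 0 h h0
  (fun t ht => conj ((Sg [::]).2 i _ (U2 _ _ hh ht)) ((Sg [::]).2 i _ (U0 t ht))).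
have xih' : 0 <= xi <= h by rewrite !ltW.
have [eta /andP[eta0 etah] E2] := @mvt_gen (partial i g) (fun _ => 0) (p + xi *: eb i) p (eb j) 0 h h0
  (fun t ht => conj ((Sg [:: i]).2 j _ (U1 _ _ xih' ht)) (derivable_cst _ _ _)).
exists xi, eta; split => //; try by rewrite !ltW.
move: E1 E2; rewrite !scale0r !addr0 derive_cst subr0 !subr0 => E1 E2.
rewrite [p + h *: eb j + h *: eb i]addrAC [p + h *: eb j + xi *: eb i]addrAC in E1.
rewrite /partial in E1 E2 *.
rewrite E2 in E1; rewrite -[RHS]/(h * h * 'D_(eb j) ('D_(eb i) g) (p + xi *: eb i + eta *: eb j)).
transitivity (g (p + h *: eb i + h *: eb j) - g (p + h *: eb i) - (g (p + h *: eb j) - g p)).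
  by ring.
by rewrite E1; ring.
Qed.

Lemma quarter_lt (x : R) : 0 < x -> x / 4 + x / 4 < x.
Proof. by move=> *; lra. Qed.

Lemma half_contra (d a b : R) : d <= a + b -> a < d / 2 -> b < d / 2 -> False.
Proof. by move=> *; lra. Qed.

Lemma swap_eq (g A B : V -> R) (p a b q1 q2 : V) (h : R) :
  0 < h ->
  g (p + a + b) - g (p + a) - g (p + b) + g p = h * h * B q1 ->
  g (p + b + a) - g (p + b) - g (p + a) + g p = h * h * A q2 ->
  B q1 = A q2.
Proof.
move=> h0 E1 E2.
have hh : h * h != 0 by rewrite mulf_neq0 // gt_eqF.
apply: (mulfI hh). rewrite -E1 -E2 [p + b + a]addrAC. ring.
Qed.

Lemma final_contra (Ap Bp Aq Bq : R) : Bq = Aq ->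
  `|Ap - Aq| < `|Ap - Bp| / 2 -> `|Bp - Bq| < `|Ap - Bp| / 2 -> False.
Proof.
move=> AB a b; apply: (@half_contra (`|Ap - Bp|) _ _ _ a b).
rewrite [`|Bp - _|]distrC AB.
rewrite (_ : Ap - Bp = (Ap - Aq) + (Aq - Bp)); first exact: ler_normD.
by rewrite addrA subrK.
Qed.

Lemma schwarz g i j p : S g -> U p ->
  partial i (partial j g) p = partial j (partial i g) p.
Proof.
move=> Sg Up.
have cA : {for p, continuous (partial i (partial j g))} := (Sg [:: i; j]).1 p Up.
have cB : {for p, continuous (partial j (partial i g))} := (Sg [:: j; i]).1 p Up.
set A := partial i (partial j g) in cA *.
set B := partial j (partial i g) in cB *.
apply/eqP/negPn/negP => ne.
have d0 : 0 < `|A p - B p| by rewrite normr_gt0 subr_eq0.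
set d := `|A p - B p| in d0.
have d2 : 0 < d / 2 by rewrite divr_gt0.
have N1 := nearU Up.
move/cvgrPdist_lt : (cA) => /(_ _ d2) N2.
move/cvgrPdist_lt : (cB) => /(_ _ d2) N3.
have N : \forall q \near p, U q /\ `|A p - A q| < d / 2 /\ `|B p - B q| < d / 2.
  near=> q; split; [exact: (near N1 q)|split; [exact: (near N2 q)| exact: (near N3 q)]].
have [del del0 Hd] := (nbhs_ballP _ _).1 N.
pose h := del / 4.
have h0 : 0 < h by rewrite divr_gt0.
have Hpt : forall k l s t, 0 <= s <= h -> 0 <= t <= h ->
   U (p + s *: eb k + t *: eb l) /\
   `|A p - A (p + s *: eb k + t *: eb l)| < d / 2 /\
   `|B p - B (p + s *: eb k + t *: eb l)| < d / 2.
  move=> k l s t hs ht; apply: Hd; rewrite -ball_normE /=.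
  apply: le_lt_trans (dist_pt p k l hs ht) _.
  exact: quarter_lt.
have [s1 [t1 [hs1 ht1 E1]]] := @mvt2 g p i j h Sg h0
   (fun s t hs ht => (Hpt i j s t hs ht).1) (fun s t hs ht => (Hpt j i s t hs ht).1).
have [s2 [t2 [hs2 ht2 E2]]] := @mvt2 g p j i h Sg h0
   (fun s t hs ht => (Hpt j i s t hs ht).1) (fun s t hs ht => (Hpt i j s t hs ht).1).
have AB := swap_eq h0 E1 E2.
have [_ [_ b1]] := Hpt i j s1 t1 hs1 ht1.
have [_ [a2 _]] := Hpt j i s2 t2 hs2 ht2.
exact: (final_contra AB a2 b1).
Unshelve. all: by end_near.
Qed.


Lemma commute s k g : S g -> eqU (ip s (partial k g)) (partial k (ip s g)).
Proof.
move=> Sg; elim: s => [|j s IH] //= p Up.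
rewrite (partial_eqU j IH Up).
exact: schwarz (S_ip s Sg) Up.
Qed.

Lemma move_in s1 s2 k g : S g ->
  eqU (ip (s1 ++ k :: s2) g) (ip (s1 ++ s2) (partial k g)).
Proof.
move=> Sg p Up; rewrite !ip_cat /=.
by rewrite (ip_eqU s1 (commute s2 k Sg) Up).
Qed.

Lemma perm_ip s1 s2 g : S g -> perm_eq s1 s2 -> eqU (ip s1 g) (ip s2 g).
Proof.
elim: s1 s2 g => [|k s1 IH] s2 g Sg pe.
  by move: pe; rewrite perm_sym => /perm_nilP ->.
have ks : k \in s2 by rewrite -(perm_mem pe) mem_head.
move: pe; case/splitPr: ks => s2a s2b pe.
have pe' : perm_eq s1 (s2a ++ s2b).
  rewrite -(perm_cons k); apply: perm_trans pe _.
  by rewrite -[k :: s2b]cat1s perm_catCA.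
move=> p Up.
rewrite (move_in _ _ _ Sg Up) /= (partial_eqU k (IH _ _ Sg pe') Up).
have := move_in [::] (s2a ++ s2b) k Sg Up; rewrite /= => ->.
by [].
Qed.

Lemma ipN N f s : SU N f -> (size s <= N.+1)%N ->
  eqU (ip s (fun p => - f p)) (fun p => - ip s f p).
Proof.
move=> Sf; elim: s => [|k s IH] //= Hs p Up.
rewrite (partial_eqU k (IH (ltnW Hs)) Up) /partial.
have [_ df] := Sf s Hs.
exact: (deriveN (df k p Up)).
Qed.

Lemma S_opp f : S f -> S (fun p => - f p).
Proof.
move=> Sf; have -> : (fun p => - f p) = (fun _ => -1) \* f.
  by apply/funext => p /=; rewrite mulN1r.
exact: SM (S_cst _) Sf.
Qed.

Lemma ord_opp f a : S f -> ordo f a -> ordo (fun p => - f p) a.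
Proof.
move=> Sf fa; have -> : (fun p => - f p) = (fun _ => -1) \* f.
  by apply/funext => p /=; rewrite mulN1r.
by rewrite -[a]add0n; apply: ord_mul (S_cst _) Sf _ fa => s; rewrite ltn0.
Qed.

Lemma S_sub f g : S f -> S g -> S (fun p => f p - g p).
Proof. by move=> Sf Sg; apply: (SD Sf (S_opp Sg)). Qed.

Lemma ord_sub f g a : S f -> S g -> ordo f a -> ordo g a ->
  ordo (fun p => f p - g p) a.
Proof. by move=> Sf Sg fa ga; apply: (ord_add Sf (S_opp Sg) fa (ord_opp Sg ga)). Qed.

Lemma ipD_at s f g p : S f -> S g -> U p -> ip s (f \+ g) p = ip s f p + ip s g p.
Proof.
by move=> Sf Sg Up; rewrite (ipD (N := size s) (S_SU Sf) (S_SU Sg) (leqW (leqnn _)) Up).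
Qed.

Lemma ipN_at s f p : S f -> U p -> ip s (fun q => - f q) p = - ip s f p.
Proof.
by move=> Sf Up; rewrite (ipN (N := size s) (S_SU Sf) (leqW (leqnn _)) Up).
Qed.

Lemma ipB_at s f g p : S f -> S g -> U p ->
  ip s (fun q => f q - g q) p = ip s f p - ip s g p.
Proof.
move=> Sf Sg Up; rewrite (ipD_at s Sf (S_opp Sg) Up).
by rewrite (ipN_at s Sg Up).
Qed.

Lemma ipM_cst s c f p : S f -> U p -> ip s (fun q => c * f q) p = c * ip s f p.
Proof.
move=> Sf; elim: s p => [|k s IH] //= p Up.
rewrite (partial_eqU k (fun q Uq => IH q Uq) Up) /partial.
have [_ df] := Sf s.
have := deriveZ c (df k p Up); rewrite /= => ->.
by [].
Qed.


Lemma eqU_sym f g : eqU f g -> eqU g f.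
Proof. by move=> fg p Up; rewrite fg. Qed.

Lemma eb_mul k (M : 'M[R]_(n + n)) l : (eb k *m M) 0 l = M k l.
Proof.
rewrite !mxE (bigD1 k) //= mxE eqxx mul1r big1 ?addr0 // => i /negbTE ik.
by rewrite mxE ik mul0r.
Qed.

Lemma dR_eb g p k : dR g p (eb k) = partial k g p.
Proof.
rewrite /dR (bigD1 k) //= mxE eqxx mul1r big1 ?addr0 // => i /negbTE ik.
by rewrite mxE ik mul0r.
Qed.

Lemma dR_ebM g p k M : dR g p (eb k *m M) = \sum_(l < n + n) M k l * partial l g p.
Proof. by rewrite /dR; apply: eq_bigr => l _; rewrite eb_mul. Qed.

Variables (J : V -> 'M[R]_(n + n)) (u v : V -> R).
Hypothesis acJ : almost_complex_on U J.
Hypothesis hT : forall j : 'I_n,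
  in_T10 (J o) (2^-1 *: @ex R n j) (- (2^-1 *: @ey R n j)).
Hypothesis Su : S u.
Hypothesis Sv : S v.
Hypothesis hol : holomorphic_on U J u v.

Lemma CRuv p k : U p ->
  partial k u p = \sum_(l < n + n) J p k l * partial l v p /\
  partial k v p = - \sum_(l < n + n) J p k l * partial l u p.
Proof.
move=> Up.
have T : in_T01 (J p) (eb k) (eb k *m J p).
  by split=> //; rewrite -mulmxA (acJ.2 p Up) mulmxN mulmx1.
have [h1 h2] := hol Up T; rewrite !dR_eb !dR_ebM in h1 h2.
split; apply/eqP; rewrite -subr_eq0 ?opprK; apply/eqP => //.
Qed.

Lemma J0row j l : J o (rshift n j) l = - (l == lshift n j)%:R.
Proof.
have [_ H] := hT j.
have := congr1 (fun M : 'M[R]_(1, n + n) => M 0 l) H; rewrite /= mulNmx -scalemxAl.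
rewrite [LHS]mxE [X in - X = _]mxE [RHS]mxE /ey eb_mul /ex [in RHS]mxE => E.
have h2 : (2^-1 : R) != 0 by rewrite invr_eq0 pnatr_eq0.
apply: (mulfI h2); by rewrite mulrN -E opprK.
Qed.

Lemma sumJ0 j (w : 'I_(n + n) -> R) :
  \sum_(l < n + n) J o (rshift n j) l * w l = - w (lshift n j).
Proof.
under eq_bigr => l _ do rewrite J0row mulNr.
rewrite sumrN (bigD1 (lshift n j)) //= eqxx mul1r big1 ?addr0 // => i /negbTE ->.
by rewrite mul0r.
Qed.

Definition Ru (j : 'I_n) := fun p => partial (rshift n j) u p + partial (lshift n j) v p.
Definition Rv (j : 'I_n) := fun p => partial (rshift n j) v p - partial (lshift n j) u p.

Lemma Ru_eq j : eqU (Ru j)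
  (fun p => \sum_(l < n + n) (J p (rshift n j) l - J o (rshift n j) l) * partial l v p).
Proof.
move=> p Up; rewrite /Ru (CRuv _ Up).1.
have -> : partial (lshift n j) v p = - \sum_(l < n + n) J o (rshift n j) l * partial l v p.
  by rewrite (sumJ0 j (fun l => partial l v p)) opprK.
by rewrite -sumrB; apply: eq_bigr => l _; rewrite mulrBl.
Qed.

Lemma Rv_eq j : eqU (Rv j)
  (fun p => \sum_(l < n + n) (J o (rshift n j) l - J p (rshift n j) l) * partial l u p).
Proof.
move=> p Up; rewrite /Rv (CRuv _ Up).2.
have -> : partial (lshift n j) u p = - \sum_(l < n + n) J o (rshift n j) l * partial l u p.
  by rewrite (sumJ0 j (fun l => partial l u p)) opprK.
rewrite opprK addrC -sumrB; apply: eq_bigr => l _; by rewrite mulrBl.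
Qed.

Lemma S_Ru j : S (Ru j).
Proof. exact: SD (S_partial _ Su) (S_partial _ Sv). Qed.

Lemma S_Rv j : S (Rv j).
Proof. exact: S_sub (S_partial _ Sv) (S_partial _ Su). Qed.

Lemma ord_R j k : ordo u k -> ordo v k -> ordo (Ru j) k /\ ordo (Rv j) k.
Proof.
move=> ou ov.
have SJ : forall l, S (fun p => J p (rshift n j) l).
  by move=> l; apply: acJ.1.
have oJ : forall l, ordo (fun p => J p (rshift n j) l - J o (rshift n j) l) 1.
  by move=> l [|? ?] //= _; rewrite subrr.
have oJ' : forall l, ordo (fun p => J o (rshift n j) l - J p (rshift n j) l) 1.
  by move=> l [|? ?] //= _; rewrite subrr.
split.
  apply: ord_eqU (eqU_sym (Ru_eq j)) _.
  apply: (proj2 (@S_ord_sum (fun l => (fun p => J p (rshift n j) l - J o (rshift n j) l)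
                  \* partial l v) k (index_enum _) _ _)).
    by move=> l; apply: SM (S_sub (SJ l) (S_cst _)) (S_partial _ Sv).
  move=> l; apply: (ord_le (a := 1 + k.-1)); first by lia.
  exact: ord_mul (S_sub (SJ l) (S_cst _)) (S_partial _ Sv) (oJ l) (ord_partial _ ov).
apply: ord_eqU (eqU_sym (Rv_eq j)) _.
apply: (proj2 (@S_ord_sum (fun l => (fun p => J o (rshift n j) l - J p (rshift n j) l)
                \* partial l u) k (index_enum _) _ _)).
  by move=> l; apply: SM (S_sub (S_cst _) (SJ l)) (S_partial _ Su).
move=> l; apply: (ord_le (a := 1 + k.-1)); first by lia.
exact: ord_mul (S_sub (S_cst _) (SJ l)) (S_partial _ Su) (oJ' l) (ord_partial _ ou).
Qed.


Definition Inv (P : (V -> R) * (V -> R)) (w : seq 'I_(n + n)) (r : nat) :=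
  [/\ S P.1, S P.2, ordo (fun p => P.1 p - ip w u p) r
    & ordo (fun p => P.2 p - ip w v p) r].

Lemma ord_zero f : ordo f 0.
Proof. by move=> s; rewrite ltn0. Qed.

Lemma half_id1 (a g1 g2 x : R) :
  2^-1 * ((a + g1) + ((x + a) + g2)) - a = 2^-1 * (g1 + g2 + x).
Proof. by lra. Qed.

Lemma half_id2 (a g1 g2 x : R) :
  2^-1 * ((a + g2) - ((x - a) + g1)) - a = 2^-1 * (g2 - g1 - x).
Proof. by lra. Qed.

Lemma dz_step k j P w r : ordo u k -> ordo v k -> Inv P w r.+1 ->
  (size w + r <= k)%N -> Inv (dz j P) (lshift n j :: w) r.
Proof.
move=> ou ov [S1 S2 o1 o2] Hs.
have [oRu oRv] := ord_R j ou ov.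
set c := lshift n j; set d := rshift n j.
pose G1 := fun p => P.1 p - ip w u p.
pose G2 := fun p => P.2 p - ip w v p.
have SXu := S_ip w Su; have SXv := S_ip w Sv.
have SG1 : S G1 := S_sub S1 SXu.
have SG2 : S G2 := S_sub S2 SXv.
have eP1 : P.1 = ip w u \+ G1 by apply/funext => p /=; rewrite /G1 addrC subrK.
have eP2 : P.2 = ip w v \+ G2 by apply/funext => p /=; rewrite /G2 addrC subrK.
have oXR : forall R0, ordo R0 k -> ordo (ip w R0) r.
  by move=> R0 oR s Hs'; rewrite -ip_cat; apply: oR; rewrite size_cat; lia.
have SdP1 : S (dz j P).1.
  exact: (SM (S_cst 2^-1) (SD (S_partial c S1) (S_partial d S2))).
have SdP2 : S (dz j P).2.
  exact: (SM (S_cst 2^-1) (S_sub (S_partial c S2) (S_partial d S1))).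
split => //.
- apply: (@ord_eqU (fun p => 2^-1 * (partial c G1 p + partial d G2 p + ip w (Rv j) p))).
    move=> p Up.
    have E1 : partial c P.1 p = partial c (ip w u) p + partial c G1 p.
      by rewrite eP1; apply: (ipD_at [:: c] SXu SG1 Up).
    have E2 : partial d P.2 p = partial d (ip w v) p + partial d G2 p.
      by rewrite eP2; apply: (ipD_at [:: d] SXv SG2 Up).
    have E3 : partial d (ip w v) p = ip w (partial d v) p.
      by rewrite (commute w d Sv Up).
    have E4 : ip w (partial d v) p = ip w (Rv j) p + ip w (partial c u) p.
      have -> : partial d v = Rv j \+ partial c u.
        by apply/funext => q /=; rewrite /Rv subrK.
      exact: (ipD_at w (S_Rv j) (S_partial c Su) Up).
    have E5 : ip w (partial c u) p = partial c (ip w u) p.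
      by rewrite (commute w c Su Up).
    rewrite /= E1 E2 E3 E4 E5; symmetry; exact: half_id1.
  rewrite -[r]add0n; apply: ord_mul (S_cst _) _ (ord_zero _) _.
    exact: SD (SD (S_partial c SG1) (S_partial d SG2)) (S_ip w (S_Rv j)).
  apply: ord_add (SD (S_partial c SG1) (S_partial d SG2)) (S_ip w (S_Rv j)) _ (oXR _ oRv).
  exact: ord_add (S_partial c SG1) (S_partial d SG2) (ord_partial c o1) (ord_partial d o2).
- apply: (@ord_eqU (fun p => 2^-1 * (partial c G2 p - partial d G1 p - ip w (Ru j) p))).
    move=> p Up.
    have E1 : partial c P.2 p = partial c (ip w v) p + partial c G2 p.
      by rewrite eP2; apply: (ipD_at [:: c] SXv SG2 Up).
    have E2 : partial d P.1 p = partial d (ip w u) p + partial d G1 p.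
      by rewrite eP1; apply: (ipD_at [:: d] SXu SG1 Up).
    have E3 : partial d (ip w u) p = ip w (partial d u) p.
      by rewrite (commute w d Su Up).
    have E4 : ip w (partial d u) p = ip w (Ru j) p - ip w (partial c v) p.
      have -> : partial d u = (fun q => Ru j q - partial c v q).
        by apply/funext => q /=; rewrite /Ru addrK.
      exact: (ipB_at w (S_Ru j) (S_partial c Sv) Up).
    have E5 : ip w (partial c v) p = partial c (ip w v) p.
      by rewrite (commute w c Sv Up).
    rewrite /= E1 E2 E3 E4 E5; symmetry; exact: half_id2.
  rewrite -[r]add0n; apply: ord_mul (S_cst _) _ (ord_zero _) _.
    exact: S_sub (S_sub (S_partial c SG2) (S_partial d SG1)) (S_ip w (S_Ru j)).
  apply: ord_sub (S_sub (S_partial c SG2) (S_partial d SG1)) (S_ip w (S_Ru j)) _ (oXR _ oRu).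
  exact: ord_sub (S_partial c SG2) (S_partial d SG1) (ord_partial c o2) (ord_partial d o1).
Qed.


Lemma dz_iter k j a : ordo u k -> ordo v k -> forall P w r, Inv P w (r + a) ->
  (size w + (r + a) <= k.+1)%N ->
  Inv (iter a (dz j) P) (nseq a (lshift n j) ++ w) r.
Proof.
move=> ou ov; elim: a => [|a IH] P w r HI Hs; first by rewrite addn0 in HI.
rewrite addnS -addSn in HI Hs.
have HI' := IH P w r.+1 HI Hs.
rewrite iterS /=; apply: dz_step ou ov HI' _.
rewrite size_cat size_nseq; lia.
Qed.

Definition Wd (alpha : 'I_n -> nat) (l : seq 'I_n) :=
  foldr (fun j w => nseq (alpha j) (lshift n j) ++ w) [::] l.

Lemma size_Wd alpha l : size (Wd alpha l) = (\sum_(j <- l) alpha j)%N.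
Proof.
elim: l => [|j l IH] /=; first by rewrite big_nil.
by rewrite size_cat size_nseq IH big_cons.
Qed.

Lemma dz_fold k alpha l r : ordo u k -> ordo v k ->
  (r + \sum_(j <- l) alpha j <= k.+1)%N ->
  Inv (foldr (fun j g => iter (alpha j) (dz j) g) (u, v) l) (Wd alpha l) r.
Proof.
move=> ou ov; elim: l r => [|j l IH] r Hs.
  have E : forall g : V -> R, (fun p => g p - ip [::] g p) = (fun _ => 0).
    by move=> g; apply/funext => p; rewrite subrr.
  by split => //=; rewrite E; apply: ord_cst0.
rewrite big_cons in Hs.
change (Wd alpha (j :: l)) with (nseq (alpha j) (lshift n j) ++ Wd alpha l).
apply: dz_iter ou ov _ _ _ (IH (r + alpha j) _) _; first by lia.
rewrite size_Wd; lia.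
Qed.

Lemma purex k alpha : ordo u k -> ordo v k -> mindex_size alpha = k ->
  (dz_multi alpha (u, v)).1 o = 0 -> (dz_multi alpha (u, v)).2 o = 0 ->
  ip (Wd alpha (enum 'I_n)) u o = 0 /\ ip (Wd alpha (enum 'I_n)) v o = 0.
Proof.
move=> ou ov hk; rewrite /dz_multi => h1 h2.
have Hs : (1 + \sum_(j <- enum 'I_n) alpha j <= k.+1)%N.
  by rewrite big_enum /= -hk.
have [_ _ o1 o2] := dz_fold ou ov Hs.
have := o1 [::] erefl; have := o2 [::] erefl; rewrite /= h1 h2 !sub0r.
by move=> /eqP; rewrite oppr_eq0 => /eqP -> /eqP; rewrite oppr_eq0 => /eqP ->.
Qed.

Lemma sum_count (t : seq 'I_n) : (\sum_(j < n) count_mem j t)%N = size t.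
Proof.
elim: t => [|x t IH] /=; first by rewrite big1.
rewrite big_split /= IH (bigD1 x) //= eqxx big1 ?addn0 ?add1n // => j /negbTE.
by rewrite eq_sym => ->.
Qed.

Lemma perm_W (t : seq 'I_n) :
  perm_eq (map (lshift n) t) (Wd (fun j => count_mem j t) (enum 'I_n)).
Proof.
have -> : forall alpha l, Wd alpha l =
    map (lshift n) (flatten [seq nseq (alpha j) j | j <- l]).
  by move=> alpha; elim => [|j l IH] //=; rewrite IH map_cat map_nseq.
apply: perm_map; rewrite /perm_eq; apply/allP => x _; apply/eqP.
rewrite count_flatten sumnE !big_map -enumT big_enum /=.
rewrite (bigD1 x) //= count_nseq /= eqxx mul1n big1 ?addn0 // => j /negbTE jx.
by rewrite count_nseq /= ?jx ?(eq_sym x j) ?jx ?mul0n.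
Qed.

Definition isy (x : 'I_(n + n)) : bool := (n <= x)%N.

Lemma xy_cases (x : 'I_(n + n)) :
  (exists j, x = lshift n j) \/ (exists j, x = rshift n j).
Proof.
case: (splitP x) => j Hj; [left|right]; exists j; apply: val_inj; by rewrite /= Hj.
Qed.

Lemma isy_l j : isy (lshift n j) = false.
Proof. by rewrite /isy /= leqNgt ltn_ord. Qed.

Lemma isy_r j : isy (rshift n j) = true.
Proof. by rewrite /isy /= leq_addr. Qed.

Lemma purex_seq s : count isy s = 0%N -> exists t, s = map (lshift n) t.
Proof.
elim: s => [|x s IH] /=; first by exists [::].
case: (xy_cases x) => [[j ->]|[j ->]]; last by rewrite isy_r.
rewrite isy_l add0n => /IH [t ->]; by exists (j :: t).
Qed.

Variable m : nat.
Hypothesis hdz : forall alpha : 'I_n -> nat, (mindex_size alpha <= m)%N ->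
  (dz_multi alpha (u, v)).1 o = 0 /\ (dz_multi alpha (u, v)).2 o = 0.

Lemma stage k : (k <= m)%N -> ordo u k -> ordo v k ->
  forall s, size s = k -> ip s u o = 0 /\ ip s v o = 0.
Proof.
move=> km ou ov.
suff H : forall N s, (count isy s <= N)%N -> size s = k ->
    ip s u o = 0 /\ ip s v o = 0.
  by move=> s; apply: (H (count isy s)).
elim=> [|N IH] s cs sz.
  have [t Et] : exists t, s = map (lshift n) t.
    by apply: purex_seq; lia.
  subst s.
  pose alpha := fun j => count_mem j t.
  have hk : mindex_size alpha = k by rewrite /mindex_size sum_count -sz size_map.
  have hkm : (mindex_size alpha <= m)%N by rewrite hk.
  have [h1 h2] := hdz hkm.
  have [z1 z2] := purex ou ov hk h1 h2.
  rewrite (perm_ip Su (perm_W t) Uo) (perm_ip Sv (perm_W t) Uo).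
  by split; [exact: z1 | exact: z2].
have [cN|cN] := leqP (count isy s) N; first exact: IH.
have [x xs yx] : exists2 x, x \in s & isy x.
  by apply/hasP; rewrite has_count; exact: (leq_ltn_trans (leq0n N) cN).
case: (xy_cases x) yx => [[j Ej]|[j Ej]] yx; subst x; first by rewrite isy_l in yx.
move: xs cs cN sz; case/splitPr => s1 s2 cs cN sz.
have [oRu oRv] := ord_R j ou ov.
have szw : size (s1 ++ s2) = k.-1 by move: sz; rewrite !size_cat /=; lia.
have Hc : (count isy (rcons (s1 ++ s2) (lshift n j)) <= N)%N.
  move: cs; rewrite -cats1 !count_cat /= isy_l isy_r /=; lia.
have Hsz : size (rcons (s1 ++ s2) (lshift n j)) = k.
  by move: sz; rewrite size_rcons !size_cat /=; lia.
have [IHu IHv] := IH _ Hc Hsz.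
rewrite ip_rcons in IHu; rewrite ip_rcons in IHv.
have ws : (size (s1 ++ s2) < k)%N by move: sz; rewrite !size_cat /=; lia.
split.
  rewrite (move_in _ _ _ Su Uo).
  have -> : partial (rshift n j) u = (fun q => Ru j q - partial (lshift n j) v q).
    by apply/funext => q /=; rewrite /Ru addrK.
  by rewrite (ipB_at _ (S_Ru j) (S_partial (lshift n j) Sv) Uo) IHv oRu // subr0.
rewrite (move_in _ _ _ Sv Uo).
have -> : partial (rshift n j) v = Rv j \+ partial (lshift n j) u.
  by apply/funext => q /=; rewrite /Rv subrK.
by rewrite (ipD_at _ (S_Rv j) (S_partial (lshift n j) Su) Uo) IHu oRv // addr0.
Qed.

Lemma final_ord : ord_ge u v o m.+1.
Proof.
suff H : forall k, (k <= m.+1)%N -> ordo u k /\ ordo v k.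
  move=> s Hs; have [H1 H2] := H m.+1 (leqnn _); split; [exact: H1 | exact: H2].
elim=> [|k IH] Hk; first by split; apply: ord_zero.
have [ou ov] := IH (ltnW Hk).
have St := @stage k Hk ou ov.
split => s; rewrite ltnS leq_eqVlt => /orP [/eqP Hs|Hs].
- by have [] := St s Hs.
- exact: ou.
- by have [] := St s Hs.
- exact: ov.
Qed.

End Work.

Unset Implicit Arguments.
Set Strict Implicit.

Theorem lemma4p4 (R : realType) (n : nat) (U : set 'rV[R]_(n + n))
  (J : 'rV[R]_(n + n) -> 'M[R]_(n + n)) (o : 'rV[R]_(n + n))
  (u v : 'rV[R]_(n + n) -> R) (m : nat) :
  open U -> U o ->
  almost_complex_on U J ->
  (forall j : 'I_n, in_T10 (J o) (2^-1 *: @ex R n j) (- (2^-1 *: @ey R n j))) ->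
  smooth_on U u -> smooth_on U v ->
  holomorphic_on U J u v ->
  (forall alpha : 'I_n -> nat, (mindex_size alpha <= m)%N ->
     (dz_multi alpha (u, v)).1 o = 0 /\ (dz_multi alpha (u, v)).2 o = 0) ->
  ord_ge u v o m.+1.
Proof.
move=> oU Uo acJ hT Su Sv hol hdz.
exact: (final_ord oU Uo acJ hT Su Sv hol hdz).
Qed.
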